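(* Let $\mathcal F \subset \binom{[n]}{k}$ be initial and let $q$ be a positive integer with $q < n$. Let $P \subset R \subset [q]$ with $|R| \leq k$. For $S \subset [q]$ write $\mathcal F_S = \{F \setminus S : F \in \mathcal F,\ F \cap [q] = S\}$ (a family of $(k-|S|)$-subsets of $[q+1,n]$). Then $$\frac{|\mathcal F_P|}{\binom{n-q}{k-|P|}} \leq \frac{|\mathcal F_R|}{\binom{n-q}{k-|R|}}.$$
   Context: For $k$-sets $A=\{x_1<\dots<x_k\}$, $B=\{y_1<\dots<y_k\}$, $A\prec B$ means $x_i\le y_i$ for all $i$. A family $\mathcal F\subset\binom{[n]}{k}$ is initial if $A\prec B\in\mathcal F$ implies $A\in\mathcal F$. $[q+1,n]=\{q+1,\dots,n\}$. *)

(* Defs.v *)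
From mathcomp Require Import all_boot all_order all_algebra.
Set Implicit Arguments. Unset Strict Implicit. Unset Printing Implicit Defensive.

(* Convention: the ground set [n] = {1,...,n} is modelled by 'I_n, the element
   i : 'I_n standing for i+1.  This is order preserving, so [q] = {1..q}
   corresponds to {i : 'I_n | i < q}. *)

Definition sorted_elems n (A : {set 'I_n}) : seq nat :=
  sort leq (map val (enum A)).

Definition shift_le n (A B : {set 'I_n}) : bool :=
  (#|A| == #|B|) && all2 leq (sorted_elems A) (sorted_elems B).

Definition initial n k (F : {set {set 'I_n}}) : Prop :=
  forall A B : {set 'I_n}, #|A| = k -> #|B| = k ->
    shift_le A B -> B \in F -> A \in F.

Definition initseg n q : {set 'I_n} := [set i : 'I_n | val i < q].

Definition trace_fam n q (F : {set {set 'I_n}}) (S : {set 'I_n}) : {set {set 'I_n}} :=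
  [set G :\: S | G in [set G in F | G :&: initseg n q == S]].

(* Main.v *)
Require Import Defs.
From mathcomp Require Import all_boot all_order all_algebra.
Import Order.TTheory GRing.Theory Num.Theory.
Set Implicit Arguments. Unset Strict Implicit. Unset Printing Implicit Defensive.

Section Helpers.
Local Open Scope nat_scope.

Lemma all2_leq_refl (s : seq nat) : all2 leq s s.
Proof. by elim: s => //= a s ->; rewrite leqnn. Qed.

Lemma sort_cons_min (a : nat) t : all (leq a) t -> sort leq (a :: t) = a :: sort leq t.
Proof.
move=> Ha; apply: (sorted_eq leq_trans anti_leq).
- exact: sort_sorted leq_total _.
- rewrite /= path_min_sorted; first exact: (sort_sorted leq_total).
  by rewrite all_sort.
- by rewrite perm_sort perm_cons perm_sym perm_sort.
Qed.

Lemma L1 (h y : nat) u : sorted leq u -> all (leq h) u -> y \in u ->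
  all2 leq (h :: rem y u) u.
Proof.
elim: u h => [//|u0 u IH] h /= Hs /andP[hu0 Hall] Hy.
rewrite hu0 /=; case: (u0 =P y) => [e|/eqP ne]; first by rewrite all2_leq_refl.
rewrite in_cons eq_sym (negbTE ne) /= in Hy.
apply: IH => //; first exact: (path_sorted Hs).
exact: order_path_min leq_trans Hs.
Qed.

Lemma L2 (x y : nat) s : sorted leq s -> uniq s -> y \in s -> x < y -> x \notin s ->
  all2 leq (sort leq (x :: rem y s)) s.
Proof.
elim: s => [//|h s IH] Hs /= /andP[hs Hu] Hy xy.
rewrite in_cons negb_or => /andP[xh xs].
have Hmin := order_path_min leq_trans Hs.
case: eqP => [eh|/eqP ne].
  rewrite sort_cons_min; last first.
    apply/allP=> z zs; apply: leq_trans (ltnW xy) _; rewrite -eh.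
    exact: (allP Hmin).
  rewrite (sorted_sort leq_trans (path_sorted Hs)).
  by rewrite /= eh (ltnW xy) all2_leq_refl.
rewrite in_cons eq_sym (negbTE ne) /= in Hy.
have Hsr : sorted leq (rem y s) := @subseq_sorted _ leq leq_trans _ _ (rem_subseq y s) (path_sorted Hs).
have hr : all (leq h) (rem y s).
  apply/allP=> z /mem_rem zs; exact: (allP Hmin).
case: (ltngtP x h) => [xlh|hlx|exh]; last by rewrite exh eqxx in xh.
- rewrite sort_cons_min; last by apply/allP=> z; rewrite in_cons => /orP[/eqP->|/(allP hr)];
    [exact: ltnW| exact: leq_trans (ltnW xlh)].
  rewrite sort_cons_min // (sorted_sort leq_trans Hsr).
  rewrite /= (ltnW xlh); exact: (L1 (path_sorted Hs) Hmin Hy).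
- have -> : sort leq [:: x, h & rem y s] = sort leq [:: h, x & rem y s].
    by apply/perm_sortP; [exact: leq_total|exact: leq_trans|exact: anti_leq|apply/permP => p /=; rewrite addnCA].
  rewrite sort_cons_min; last by rewrite /= (ltnW hlx).
  by rewrite /= leqnn IH //; exact: (path_sorted Hs).
Qed.

Lemma mem_map_val n (X : {set 'I_n}) (v : nat) :
  (v \in map val (enum X)) = (if insub v is Some i then i \in X else false).
Proof.
case: insubP => [i _ <-|].
  by rewrite (mem_map val_inj) mem_enum.
rewrite -leqNgt => nv; apply/negbTE/mapP => [[i _ e]].
by move: (ltn_ord i); rewrite -e ltnNge nv.
Qed.

Lemma shift_swap n (B : {set 'I_n}) (x y : 'I_n) :
  y \in B -> x \notin B -> val x < val y -> shift_le (x |: (B :\ y)) B.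
Proof.
move=> yB xB xy; rewrite /shift_le; apply/andP; split.
  rewrite cardsU1 (cardsD1 y B) yB in_setD1 (negbTE xB) andbF /=.
  by rewrite add1n.
set s := sorted_elems B.
have us : uniq s by rewrite sort_uniq (map_inj_uniq val_inj) enum_uniq.
have ss : sorted leq s by apply: sort_sorted; exact: leq_total.
have ms v : (v \in s) = (v \in map val (enum B)) by rewrite mem_sort.
have xs : val x \notin s by rewrite ms (mem_map val_inj) mem_enum.
have ys : val y \in s by rewrite ms (mem_map val_inj) mem_enum.
have -> : sorted_elems (x |: (B :\ y)) = sort leq (val x :: rem (val y) s).
  apply/perm_sortP; [exact: leq_total|exact: leq_trans|exact: anti_leq|].
  apply: uniq_perm.
  - by rewrite (map_inj_uniq val_inj) enum_uniq.
  - rewrite /= rem_uniq // andbT; apply: contra xs; exact: mem_rem.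
  - move=> v; rewrite in_cons (mem_rem_uniq _ us) inE ms !mem_map_val.
    case: insubP => [i _ <-|]; first by rewrite !inE.
    rewrite -leqNgt => nv; rewrite andbF orbF; apply/esym/eqP => e.
    by move: (ltn_ord x); rewrite -e ltnNge nv.
exact: L2.
Qed.

Lemma sum_bool_card (T : finType) (P : {pred T}) (c : nat) :
  \sum_(i : T) ((i \in P) : nat) * c = #|P| * c.
Proof.
rewrite -sum_nat_const [in RHS]big_mkcond /=; apply: eq_bigr => i _.
by case: (i \in P); rewrite ?mul1n ?mul0n.
Qed.

Lemma card_initseg n q : q <= n -> #|initseg n q| = q.
Proof.
move=> qn.
have -> : initseg n q = [set widen_ord qn i | i in 'I_q].
  apply/setP=> z; rewrite inE; apply/idP/imsetP => [zq|[i _ ->]] /=.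
    by exists (Ordinal zq) => //; apply: val_inj.
  exact: ltn_ord.
rewrite card_imset ?card_ord //; move=> a b /(congr1 val) /= e; exact: val_inj.
Qed.

Lemma traceP n q (F : {set {set 'I_n}}) S H :
  reflect (exists2 G, G \in F & (G :&: initseg n q = S) /\ H = G :\: S)
          (H \in trace_fam q F S).
Proof.
apply: (iffP imsetP) => [[G]|[G GF [e ->]]].
  by rewrite inE => /andP[GF /eqP e] ->; exists G.
by exists G => //; rewrite inE GF e eqxx.
Qed.

Lemma trace_props n k q (F : {set {set 'I_n}}) S H :
  (forall G, G \in F -> #|G| = k) -> H \in trace_fam q F S ->
  H \subset ~: initseg n q /\ #|H| = k - #|S|.
Proof.
move=> Fk /traceP [G GF [e ->]]; split.
  apply/subsetP=> z; rewrite !inE -e => /andP[zS zG].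
  by apply: contra zS => zq; rewrite !inE zG zq.
by rewrite cardsD Fk // -e setIA setIid.
Qed.

Lemma step_mem n k q (F : {set {set 'I_n}}) (S H : {set 'I_n}) (x y : 'I_n) :
  (forall G, G \in F -> #|G| = k) -> initial k F ->
  x \in initseg n q -> x \notin S -> H \in trace_fam q F S -> y \in H ->
  H :\ y \in trace_fam q F (x |: S).
Proof.
move=> Fk Fi xQ xS HT yH.
have [HQ _] := trace_props Fk HT.
have yQ : y \notin initseg n q by have := subsetP HQ y yH; rewrite inE.
case/traceP: HT yH => G GF [e eH] yH.
have yG : y \in G by move: yH; rewrite eH inE => /andP[].
have xG : x \notin G by apply: contra xS => xG; rewrite -e inE xG.
have xy : val x < val y.
  by move: xQ yQ; rewrite !inE -leqNgt => a b; exact: leq_trans a b.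
apply/traceP; exists (x |: (G :\ y)); last split.
- apply: (Fi _ G) => //; last exact: shift_swap.
  + by rewrite cardsU1 in_setD1 (negbTE xG) andbF -(Fk _ GF) (cardsD1 y G) yG.
  + exact: Fk.
- move: (xQ) (yQ); rewrite !inE => xQ' yQ'.
  apply/setP=> z; rewrite !inE -e !inE.
  case: (z =P x) => [->|zx] /=; first by rewrite xQ'.
  case: (z =P y) => [->|zy] /=; last by [].
  by rewrite (negbTE yQ') andbF.
- apply/setP=> z; rewrite eH !inE.
  case: (z =P x) => [->|zx] /=; first by rewrite (negbTE xG) !andbF.
  by rewrite andbCA.
Qed.

Lemma count_step n k q (F : {set {set 'I_n}}) (S : {set 'I_n}) (x : 'I_n) :
  (forall G, G \in F -> #|G| = k) -> initial k F -> q <= n ->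
  x \in initseg n q -> x \notin S -> #|S| < k ->
  #|trace_fam q F S| * (k - #|S|) <=
  #|trace_fam q F (x |: S)| * ((n - q) - (k - #|S|).-1).
Proof.
move=> Fk Fi qn xQ xS Sk.
set j := k - #|S|.
have j0 : 0 < j by rewrite /j subn_gt0.
set TS := trace_fam q F S; set TS' := trace_fam q F (x |: S).
set Q := initseg n q.
have cS' : k - #|x |: S| = j.-1 by rewrite cardsU1 xS add1n subnS.
have low G : (G \in TS) * j <= \sum_(H : {set 'I_n}) ([&& G \in TS, H \in TS' & H \subset G] : nat).
  case GTS: (G \in TS); last by rewrite mul0n.
  rewrite mul1n.
  set Y := [set H in TS' | H \subset G].
  rewrite (eq_bigr (fun H => (H \in Y) * 1)); last by move=> H _; rewrite inE muln1.
  rewrite sum_bool_card muln1.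
  have [_ cG] := trace_props Fk GTS.
  rewrite -/j in cG; rewrite -cG -(card_in_imset (f := fun y => G :\ y)).
    apply: subset_leq_card; apply/subsetP => H /imsetP [y yG ->].
    by rewrite inE (step_mem Fk Fi xQ xS GTS yG) subD1set.
  move=> y z yG zG /= e; apply/eqP; apply: contraT => ne.
  have : y \in G :\ z by rewrite !inE ne yG.
  by rewrite -e !inE => /andP[/eqP].
have up H : \sum_(G : {set 'I_n}) ([&& G \in TS, H \in TS' & H \subset G] : nat)
    <= (H \in TS') * ((n - q) - j.-1).
  case HTS: (H \in TS'); last first.
    by rewrite mul0n big1 // => G _; rewrite andbF.
  rewrite mul1n.
  set Z := [set G in TS | H \subset G].
  rewrite (eq_bigr (fun G => (G \in Z) * 1)); last by move=> G _; rewrite !inE muln1.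
  rewrite sum_bool_card muln1.
  have [HQ cH] := trace_props Fk HTS; rewrite cS' in cH.
  apply: (@leq_trans #|[set y |: H | y in ~: Q :\: H]|); last first.
    apply: leq_trans (leq_imset_card _ _) _.
    rewrite cardsD (setIidPr HQ) cH.
    suff -> : #|~: Q| = n - q by [].
    apply/eqP; rewrite -(eqn_add2l q) subnKC // -{1}(card_initseg qn) cardsC card_ord.
    done.
  apply: subset_leq_card; apply/subsetP => G; rewrite inE => /andP[GTS HG].
  have [GQ cG] := trace_props Fk GTS; rewrite -/j in cG.
  have : #|G :\: H| == 1.
    by rewrite cardsD (setIidPr HG) cG cH -subn1 subKn.
  case/cards1P => y Ey.
  have yGH : y \in G :\: H by rewrite Ey set11.
  apply/imsetP; exists y.
    move: yGH; rewrite !inE => /andP[-> yG]; have := subsetP GQ y yG; by rewrite !inE.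
  apply/setP=> z; rewrite !inE.
  have := congr1 (fun A : {set 'I_n} => z \in A) Ey => /=; rewrite !inE.
  case zH: (z \in H) => /=; first by rewrite orbT (subsetP HG z zH).
  by rewrite orbF.
apply: (@leq_trans (\sum_(G : {set 'I_n}) (G \in TS) * j)).
  by rewrite sum_bool_card.
apply: (@leq_trans (\sum_(G : {set 'I_n}) \sum_(H : {set 'I_n}) ([&& G \in TS, H \in TS' & H \subset G] : nat))).
  by apply: leq_sum => G _; exact: low.
rewrite exchange_big /=.
apply: (@leq_trans (\sum_(H : {set 'I_n}) (H \in TS') * ((n - q) - j.-1))).
  by apply: leq_sum => H _; exact: up.
by rewrite sum_bool_card.
Qed.

Lemma ratio_step (a b m j : nat) : 0 < j -> a * j <= b * (m - j.-1) ->
  ((a%:R / ('C(m, j))%:R : rat) <= b%:R / ('C(m, j.-1))%:R)%R.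
Proof.
case: j => // j _ /= H.
case: (posnP 'C(m, j.+1)) => [->|Cp].
  by rewrite invr0 mulr0 divr_ge0 // ler0n.
have Cp' : 0 < 'C(m, j).
  by rewrite bin_gt0; move: Cp; rewrite bin_gt0; exact: ltnW.
rewrite ler_pdivrMr ?ltr0n // mulrAC ler_pdivlMr ?ltr0n // -!natrM ler_nat.
rewrite -(leq_pmul2l (ltn0Sn j)) mulnA mulnCA mul_bin_left mulnCA.
by rewrite (mulnC j.+1 a) mulnA (mulnC (m - j) b) leq_mul2r H orbT.
Qed.

End Helpers.

Local Open Scope ring_scope.

Theorem lemma2p5 (n k q : nat) (F : {set {set 'I_n}})
  (P R : {set 'I_n}) :
  (forall G, G \in F -> #|G| = k) ->
  initial k F ->
  (0 < q)%N -> (q < n)%N ->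
  P \subset R -> R \subset initseg n q -> (#|R| <= k)%N ->
  (#|trace_fam q F P|%:R / ('C(n - q, k - #|P|))%:R : rat)
    <= #|trace_fam q F R|%:R / ('C(n - q, k - #|R|))%:R.
Proof.
move=> Fk Fi q0 qn PR RQ Rk.
have qn' : (q <= n)%N by exact: ltnW.
move: {2}#|R :\: P| (erefl #|R :\: P|) => d.
elim: d P PR => [|d IH] P PR cd.
  suff eP : P = R by rewrite eP.
  apply/eqP; rewrite eqEsubset PR /=; apply/subsetP => z zR.
  apply: contraT => zP; move/eqP: cd; rewrite cards_eq0 => /eqP e.
  have : z \in R :\: P by rewrite inE zP zR.
  by rewrite e inE.
have [x xRP] : exists x, x \in R :\: P.
  by apply/set0Pn; rewrite -card_gt0 cd.
move: (xRP); rewrite inE => /andP[xP xR].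
have P'R : x |: P \subset R by rewrite subUset sub1set xR PR.
have cd' : #|R :\: (x |: P)| = d.
  have -> : R :\: (x |: P) = (R :\: P) :\ x.
    by apply/setP=> z; rewrite !inE negb_or andbA.
  by move: cd; rewrite (cardsD1 x (R :\: P)) xRP add1n => -[].
apply: le_trans (IH _ P'R cd').
have cP' : #|x |: P| = #|P|.+1 by rewrite cardsU1 xP.
have Pk : (#|P| < k)%N by rewrite -cP'; apply: leq_trans (subset_leq_card P'R) Rk.
rewrite cP' subnS.
apply: ratio_step; first by rewrite subn_gt0.
apply: count_step => //; exact: (subsetP RQ).
Qed.
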